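(* Let $\mathcal{D}$ be a distribution over probability distributions on $\mathbb{R}$ such that, with probability $1$, the distribution $X\sim\mathcal{D}$ has no atoms. For any $q,\beta>0$ with $q+\beta\le1$, we have $|\sigma_{q+\beta}^2-\sigma_q^2|\le5\beta$.
   Context: $M(\mathcal{D})$ is the mixture distribution: $\Pr_{M(\mathcal{D})}[A]=\mathbb{E}_{X\sim\mathcal{D}}[\Pr_X[A]]$. For $q'\in[0,1]$, $N_{q'}=\inf\{x:\Pr_{Y\sim M(\mathcal{D})}(Y\le x)\ge q'\}$ is the $q'$-th quantile of $M(\mathcal{D})$. For a distribution $X$ on $\mathbb{R}$, $q_X(x)=\Pr_{Y\sim X}(Y\le x)$. Define $\sigma_{q'}^2=\mathrm{Var}_{X\sim\mathcal{D}}[q_X(N_{q'})]$. *)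

(* Defs.v *)
From HB Require Import structures.
From mathcomp Require Import all_boot all_order all_algebra.
From mathcomp Require Import all_classical all_reals all_analysis.
From mathcomp Require Import giry.
Set Implicit Arguments. Unset Strict Implicit. Unset Printing Implicit Defensive.
Import Order.TTheory GRing.Theory Num.Theory.
Local Open Scope classical_set_scope.
Local Open Scope ring_scope.
Local Open Scope ereal_scope.

Section defs.
Variable R : realType.

(* A distribution D over (sub)probability distributions on R is a probability
   measure on the Giry space [giry R R]. *)

Definition mixture_cdf (D : probability (giry R R) R) (x : R) : \bar R :=
  \int[D]_X (X [set y : R | (y <= x)%R]).

(* N_{q'} = inf { x : Pr_{M(D)}(Y <= x) >= q' }, taken in the extended reals
   (inf of the empty set is +oo). *)
Definition Nq (D : probability (giry R R) R) (q' : R) : \bar R :=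
  ereal_inf [set x%:E | x in [set x : R | q'%:E <= mixture_cdf D x]].

Definition qX (X : giry R R) (t : \bar R) : \bar R :=
  X [set y : R | y%:E <= t].

Definition varD (D : probability (giry R R) R) (f : giry R R -> \bar R) : \bar R :=
  \int[D]_X ((f X - \int[D]_Y f Y) * (f X - \int[D]_Y f Y)).

Definition sigma2 (D : probability (giry R R) R) (q' : R) : \bar R :=
  varD D (fun X => qX X (Nq D q')).

End defs.

(* Main.v *)
From HB Require Import structures.
From mathcomp Require Import all_boot all_order all_algebra.
From mathcomp Require Import all_classical all_reals all_analysis.
From mathcomp Require Import giry.
Require Import Defs.
From mathcomp Require Import ring lra.
Set Implicit Arguments. Unset Strict Implicit.
Import measurable_realfun.
Import Order.TTheory GRing.Theory Num.Theory.
Local Open Scope classical_set_scope.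
Local Open Scope ring_scope.
Local Open Scope ereal_scope.

Section var.
Context d (T : measurableType d) (R : realType) (P : probability T R).

Lemma Pfin : P [set: T] < +oo.
Proof. by rewrite probability_setT ltry. Qed.

Lemma PT : (P : measure T R) [set: T] = 1.
Proof. exact: probability_setT. Qed.

Lemma bintK (f : T -> R) (K : R) : measurable_fun setT f ->
  (forall x, `|f x| <= K)%R -> P.-integrable setT (EFin \o f).
Proof.
move=> mf hf; apply: measurable_bounded_integrable => //.
  exact: Pfin.
exists K; split; first exact: num_real.
move=> M M1 x _ /=.
by have := hf x; lra.
Qed.

Lemma bint (f : T -> R) : measurable_fun setT f ->
  (forall x, 0 <= f x <= 1)%R -> P.-integrable setT (EFin \o f).
Proof.
move=> mf hf; apply: (@bintK _ 1%R) => // x.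
by have /andP[h0 h1] := hf x; rewrite ger0_norm.
Qed.

Lemma mean01 (f : T -> R) : measurable_fun setT f ->
  (forall x, 0 <= f x <= 1)%R ->
  exists m : R, \int[P]_x (f x)%:E = m%:E /\ (0 <= m <= 1)%R.
Proof.
move=> mf hf.
have fin := integrable_fin_num measurableT (bint mf hf).
exists (fine (\int[P]_x (f x)%:E)); rewrite fineK //; split => //.
rewrite -!lee_fin fineK //; apply/andP; split.
  by apply: integral_ge0 => x _; have /andP[] := hf x; rewrite lee_fin.
apply: (@le_trans _ _ (\int[P]_x (cst 1 x))).
  apply: ge0_le_integral => //.
  - by move=> x _; have /andP[] := hf x; rewrite lee_fin.
  - by apply/measurable_EFinP.
  - by move=> x _; have /andP[] := hf x; rewrite /= lee_fin.
by rewrite integral_cst // PT mule1.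
Qed.

Definition V (h : T -> \bar R) :=
  \int[P]_x ((h x - \int[P]_y h y) * (h x - \int[P]_y h y)).

Lemma var_diff (f g : T -> R) (b : R) :
  measurable_fun setT f -> measurable_fun setT g ->
  (forall x, 0 <= f x <= g x)%R -> (forall x, g x <= 1)%R ->
  \int[P]_x (g x)%:E <= \int[P]_x (f x)%:E + b%:E ->
  `| V (EFin \o g) - V (EFin \o f) | <= (5 * b)%:E.
Proof.
move=> mf mg hfg hg1 hb.
have hf : forall x, (0 <= f x <= 1)%R.
  by move=> x; have := hfg x; have := hg1 x; move=> ? /andP[? ?]; apply/andP; split; lra.
have hg : forall x, (0 <= g x <= 1)%R.
  by move=> x; have := hfg x; have := hg1 x; move=> ? /andP[? ?]; apply/andP; split; lra.
have [mF [mFE /andP[mF0 mF1]]] := mean01 mf hf.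
have [mG [mGE /andP[mG0 mG1]]] := mean01 mg hg.
have mFG : (mF <= mG)%R.
  rewrite -lee_fin -mFE -mGE; apply: ge0_le_integral => //.
  - by move=> x _; have /andP[] := hf x; rewrite lee_fin.
  - by apply/measurable_EFinP.
  - by apply/measurable_EFinP.
  - by move=> x _; have /andP[] := hfg x; rewrite lee_fin.
have hb' : (mG <= mF + b)%R by rewrite -lee_fin EFinD -mFE -mGE.
have sqm : forall (h : T -> R) m, measurable_fun setT h ->
    measurable_fun setT (fun x => (h x - m) * (h x - m))%R.
  move=> h m mh; apply: measurable_realfun.measurable_funM;
  by apply: measurable_realfun.measurable_funB => //; exact: measurable_cst.
have sqb : forall (h : T -> R) m, (forall x, 0 <= h x <= 1)%R -> (0 <= m <= 1)%R ->
    forall x, (`|(h x - m) * (h x - m)| <= 1)%R.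
  move=> h m hh /andP[m0 m1] x; have /andP[h0 h1] := hh x; rewrite normrM.
  have e : (`|h x - m| <= 1)%R by rewrite ler_norml; apply/andP; split; lra.
  have : (`|h x - m| * `|h x - m| <= 1 * 1)%R by apply: ler_pM.
  lra.
have iG := bintK (sqm g mG mg) (sqb g mG hg ltac:(apply/andP; split => //)).
have iF := bintK (sqm f mF mf) (sqb f mF hf ltac:(apply/andP; split => //)).
rewrite /V /= mFE mGE.
rewrite (eq_integral (EFin \o (fun x => (g x - mG) * (g x - mG))%R)); last first.
  by move=> x _; rewrite /= -EFinB -EFinM.
rewrite [X in _ - X](eq_integral (EFin \o (fun x => (f x - mF) * (f x - mF))%R)); last first.
  by move=> x _; rewrite /= -EFinB -EFinM.
rewrite -integralB //.
rewrite (eq_integral (EFin \o (fun x => (g x - mG) * (g x - mG) - (f x - mF) * (f x - mF))%R)); last first.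
  by move=> x _; rewrite /= -EFinB.
apply: le_trans; first apply: le_abse_integral => //.
  apply/measurable_EFinP; apply: measurable_realfun.measurable_funB; exact: sqm.
apply: (@le_trans _ _ (\int[P]_x ((2 * (g x - f x))%:E + (2 * (mG - mF))%:E))).
  apply: ge0_le_integral => //.
  - apply: measurableT_comp => //; apply/measurable_EFinP.
    apply: measurable_realfun.measurable_funB; exact: sqm.
  - apply: emeasurable_funD; apply/measurable_EFinP; last exact: measurable_cst.
    apply: measurable_realfun.measurable_funM; first exact: measurable_cst.
    exact: measurable_realfun.measurable_funB.
  - move=> x _; rewrite /= -EFinD lee_fin.
    have /andP[f0 fg] := hfg x; have g1 := hg1 x.
    have -> : ((g x - mG) * (g x - mG) - (f x - mF) * (f x - mF) =
      ((g x - f x) - (mG - mF)) * ((g x - mG) + (f x - mF)))%R by ring.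
    rewrite normrM.
    have e1 : (`|(g x - f x) - (mG - mF)| <= (g x - f x) + (mG - mF))%R.
      by rewrite ler_norml; apply/andP; split; lra.
    have e2 : (`|(g x - mG) + (f x - mF)| <= 2)%R.
      by rewrite ler_norml; apply/andP; split; lra.
    have : (`|(g x - f x) - (mG - mF)| * `|(g x - mG) + (f x - mF)| <=
            ((g x - f x) + (mG - mF)) * 2)%R by apply: ler_pM.
    lra.
have i1 : P.-integrable setT (EFin \o (fun x => 2 * (g x - f x))%R).
  apply: (@bintK _ 2%R).
    apply: measurable_realfun.measurable_funM; first exact: measurable_cst.
    exact: measurable_realfun.measurable_funB.
  move=> x; have /andP[f0 fg] := hfg x; have g1 := hg1 x.
  by rewrite ger0_norm; lra.
have i2 : P.-integrable setT (EFin \o (fun x => 2 * (mG - mF))%R).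
  apply: (@bintK _ 2%R); first exact: measurable_cst.
  by move=> x; rewrite ger0_norm; lra.
rewrite integralD //.
rewrite integral_cst // PT mule1.
rewrite (eq_integral (fun x => 2%:E * ((g x)%:E - (f x)%:E))); last first.
  by move=> x _; rewrite EFinM EFinB.
rewrite integralZl //; last first.
  apply: integrableB => //; [exact: bint | exact: bint].
rewrite integralB //; [|exact: bint|exact: bint].
rewrite mGE mFE -EFinB -EFinM -EFinD lee_fin; lra.
Qed.

End var.

Section main.
Context (R : realType) (D : probability (giry R R) R).

Definition M : giry R R := giry_join (D : giry (giry R R) R).
Lemma ME A : M A = \int[D]_X X A.
Proof. reflexivity. Qed.

Definition S (t : \bar R) := [set y : R | y%:E <= t].
Definition S' (t : \bar R) := [set y : R | y%:E < t].

Lemma mS t : measurable (S t).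
Proof.
case: t => [r||].
- have -> : S r%:E = `]-oo, r]%classic.
    by apply/seteqP; split => y; rewrite /S /= in_itv /= lee_fin.
  exact: measurable_itv.
- have -> : S +oo = setT by apply/seteqP; split => y //= _; rewrite /S /= leey.
  exact: measurableT.
- have -> : S -oo = set0 by apply/seteqP; split => y //=; rewrite /S /= leeNy_eq.
  exact: measurable0.
Qed.

Lemma mS' t : measurable (S' t).
Proof.
case: t => [r||].
- have -> : S' r%:E = `]-oo, r[%classic.
    by apply/seteqP; split => y; rewrite /S' /= in_itv /= lte_fin.
  exact: measurable_itv.
- have -> : S' +oo = setT by apply/seteqP; split => y //= _; rewrite /S' /= ltry.
  exact: measurableT.
- have -> : S' -oo = set0.
    by apply/seteqP; split => y //=; rewrite /S' /= ltNge leNye.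
  exact: measurable0.
Qed.

Lemma cdfE x : mixture_cdf D x = M (S x%:E).
Proof.
reflexivity.
Qed.

Lemma MS_le x y : x <= y -> M (S x) <= M (S y).
Proof.
move=> xy; apply: le_measure; rewrite ?inE; [exact: mS| exact: mS|].
by move=> z; rewrite /S /= => h; apply: le_trans xy.
Qed.

Lemma Mfin A : measurable A -> M A < +oo.
Proof.
move=> mA; apply: (@le_lt_trans _ _ (M setT)).
  by apply: le_measure; rewrite ?inE.
exact: (le_lt_trans (sprobability_setT (s := M)) (ltry 1%R)).
Qed.

Lemma seq_dn t : t < +oo -> exists u : nat -> R,
  [/\ forall n, t < (u n)%:E, forall n m, (n <= m)%N -> (u m <= u n)%R &
      \bigcap_n S (u n)%:E = S t].
Proof.
case: t => [r||] // _.
- exists (fun n => r + (n.+1%:R)^-1)%R; split.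
  + by move=> n; rewrite lte_fin ltrDl invr_gt0.
  + move=> n m nm; by rewrite lerD2l lef_pV2 ?posrE // ler_nat ltnS.
  + apply/seteqP; split => y /=; rewrite /S /=.
      move=> h; rewrite lee_fin; apply/ler_addgt0Pr => e e0.
      have e1 : (0 <= e^-1)%R by rewrite invr_ge0 ltW.
      have := archi_boundP e1.
      set k := Num.Def.archi_bound _ => hk.
      have := h k I; move=> hy; move: hy; rewrite /= lee_fin => hy; apply: (le_trans hy); rewrite lerD2l.
      rewrite -[e]invrK lef_pV2 ?posrE ?invr_gt0 //.
      apply: (le_trans (ltW hk)); by rewrite ler_nat.
    move=> h n _; rewrite /S /= lee_fin; move: h; rewrite lee_fin => h.
    by apply: (le_trans h); rewrite lerDl invr_ge0.
- exists (fun n => - n%:R)%R; split.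
  + by move=> n; rewrite ltNye.
  + by move=> n m nm; rewrite lerN2 ler_nat.
  + apply/seteqP; split => y /=; rewrite /S /=; last by rewrite leeNy_eq.
    move=> h; exfalso.
    have := archi_boundP (normr_ge0 y); set k := Num.Def.archi_bound _ => hk.
    have := h k I; rewrite /= lee_fin => hy.
    have : (- y <= `|y|)%R by rewrite -normrN ler_norm.
    lra.
Qed.

Lemma seq_up t : -oo < t -> exists u : nat -> R,
  [/\ forall n, (u n)%:E < t, forall n m, (n <= m)%N -> (u n <= u m)%R &
      \bigcup_n S (u n)%:E = S' t].
Proof.
case: t => [r||] // _.
- exists (fun n => r - (n.+1%:R)^-1)%R; split.
  + by move=> n; rewrite lte_fin ltrBlDr ltrDl invr_gt0.
  + by move=> n m nm; rewrite lerD2l lerN2 lef_pV2 ?posrE // ler_nat ltnS.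
  + apply/seteqP; split => y /=; rewrite /S /S' /=.
      move=> [n _]; rewrite /= !lte_fin lee_fin => hy; apply: (le_lt_trans hy).
      by rewrite ltrBlDr ltrDl invr_gt0.
    rewrite lte_fin => h.
    have e0 : (0 < r - y)%R by rewrite subr_gt0.
    have e1 : (0 <= (r - y)^-1)%R by rewrite invr_ge0 ltW.
    have := archi_boundP e1; set k := Num.Def.archi_bound _ => hk.
    exists k => //=; rewrite lee_fin lerBrDr -lerBrDl.
    rewrite -[(r - y)%R]invrK lef_pV2 ?posrE ?invr_gt0 //.
    apply: (le_trans (ltW hk)); by rewrite ler_nat.
- exists (fun n => n%:R)%R; split.
  + by move=> n; rewrite ltry.
  + by move=> n m nm; rewrite ler_nat.
  + apply/seteqP; split => y /=; rewrite /S /S' /=; first by rewrite ltry.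
    move=> _.
    have := archi_boundP (normr_ge0 y); set k := Num.Def.archi_bound _ => hk.
    exists k => //=; rewrite lee_fin.
    have : (y <= `|y|)%R by rewrite ler_norm.
    lra.
Qed.

Lemma lower q' : Nq D q' < +oo -> q'%:E <= M (S (Nq D q')).
Proof.
move=> ht; have [u [ut udn uS]] := seq_dn ht.
have hom : {homo (fun n => S (u n)%:E) : n m / (n <= m)%N >-> (m <= n)%O}.
  move=> n m nm; apply/subsetPset => y; rewrite /S /= !lee_fin => h.
  exact: le_trans h (udn _ _ nm).
have cv := @nonincreasing_cvg_mu _ _ _ M (fun n => S (u n)%:E)
  (Mfin (mS _)) (fun n => mS _) (ltac:(rewrite uS; exact: mS)) hom.
rewrite -uS -(cvg_lim _ cv) //; apply: lime_ge; first by apply/cvg_ex; eexists; exact: cv.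
apply: nearW => n /=.
have [_ [x Ex <-] xu] := ereal_inf_lt (ut n).
move: Ex; rewrite /= cdfE => Ex; apply: (le_trans Ex); apply: MS_le; exact: ltW.
Qed.

Lemma upper q' : -oo < Nq D q' -> M (S' (Nq D q')) <= q'%:E.
Proof.
move=> ht; have [u [ut uup uS]] := seq_up ht.
have hom : {homo (fun n => S (u n)%:E) : n m / (n <= m)%N >-> (n <= m)%O}.
  move=> n m nm; apply/subsetPset => y; rewrite /S /= !lee_fin => h.
  exact: le_trans h (uup _ _ nm).
have cv := @nondecreasing_cvg_mu _ _ _ M (fun n => S (u n)%:E)
  (fun n => mS _) (ltac:(rewrite uS; exact: mS')) hom.
rewrite -uS -(cvg_lim _ cv) //; apply: lime_le; first by apply/cvg_ex; eexists; exact: cv.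
apply: nearW => n /=.
rewrite leNgt; apply/negP => h.
have : Nq D q' <= (u n)%:E.
  apply: ereal_inf_lbound; exists (u n) => //=; rewrite cdfE; exact: ltW.
by rewrite leNgt ut.
Qed.

Lemma qXE (X : giry R R) t : qX X t = (fine (qX X t))%:E.
Proof.
rewrite fineK // ge0_fin_numE //.
apply: (@le_lt_trans _ _ (X setT)); last first.
  exact: (le_lt_trans (sprobability_setT (s := X)) (ltry 1%R)).
by apply: le_measure; rewrite ?inE //; exact: mS.
Qed.

Lemma qX01 (X : giry R R) t : (0 <= fine (qX X t) <= 1)%R.
Proof.
rewrite -!lee_fin -qXE; apply/andP; split => //.
apply: (@le_trans _ _ (X setT)); last exact: sprobability_setT.
by apply: le_measure; rewrite ?inE //; exact: mS.
Qed.

Lemma mfa t : measurable_fun setT (fun X : giry R R => fine (qX X t)).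
Proof.
apply/measurable_EFinP.
rewrite (_ : _ \o _ = fun X : giry R R => X (S t)).
  exact: measurable_giry_ev (mS _).
by apply: funext => X /=; rewrite -qXE.
Qed.

Lemma intE t : \int[D]_X (fine (qX X t))%:E = M (S t).
Proof. by rewrite ME; apply: eq_integral => X _; rewrite -qXE. Qed.

End main.

Unset Implicit Arguments.

Theorem lemma4p4 (R : realType) (D : probability (giry R R) R)
  (hD : {ae D, forall X : giry R R,
          X [set: R] = 1 /\ forall x : R, X [set x] = 0})
  (q beta : R) (hq : (0 < q)%R) (hbeta : (0 < beta)%R)
  (hqb : (q + beta <= 1)%R) :
  `| sigma2 D (q + beta) - sigma2 D q | <= (5 * beta)%:E.
Proof.
have t12 : Nq D q <= Nq D (q + beta).
  apply: le_ereal_inf => _ [x Ex <-]; exists x => //=.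
  apply: le_trans Ex; rewrite lee_fin lerDl ltW //.
have t1n : -oo < Nq D q.
  rewrite ltNge leeNy_eq; apply/negP => /eqP h.
  have := @lower R D q; rewrite h => /(_ (ltNye _)).
  rewrite (_ : S -oo = set0); last first.
    by apply/seteqP; split => y //=; rewrite /S /= leeNy_eq.
  by rewrite measure0 lee_fin leNgt hq.
have t2n : -oo < Nq D (q + beta) by apply: lt_le_trans t12.
have ea : forall t, (fun X : giry R R => qX X t) = EFin \o (fun X : giry R R => fine (qX X t)).
  by move=> t; apply: funext => X /=; rewrite -qXE.
rewrite /sigma2 !ea.
apply: (@var_diff _ _ R D (fun X => fine (qX X (Nq D q)))
                         (fun X => fine (qX X (Nq D (q + beta)))) beta).
- exact: mfa.
- exact: mfa.
- move=> X; have /andP[-> _] := qX01 X (Nq D q) => /=.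
  rewrite -lee_fin -!qXE; apply: le_measure; rewrite ?inE; try exact: mS.
  by move=> y; rewrite /S /= => h; apply: le_trans t12.
- by move=> X; have /andP[_ ->] := qX01 X (Nq D (q + beta)).
rewrite !intE.
have [t1oo|t1fin] := eqVneq (Nq D q) +oo.
  have t2oo : Nq D (q + beta) = +oo by apply/eqP; rewrite -leye_eq -t1oo.
  rewrite t1oo t2oo; apply: leeDl; rewrite lee_fin ltW //.
have l1 := @lower R D q (ltac:(by rewrite ltey)).
have u2 := @upper R D (q + beta) t2n.
have ae2 : M D (S (Nq D (q + beta))) = M D (S' (Nq D (q + beta))).
  rewrite !ME; apply: ae_eq_integral => //.
  - exact: measurable_giry_ev (mS _).
  - exact: measurable_giry_ev (mS' _).
  apply: filterS hD => X [_ HX] _.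
  case: (Nq D (q + beta)) => [r||].
  - have -> : S r%:E = S' r%:E `|` [set r].
      apply/seteqP; split => y; rewrite /S /S' /=.
        by rewrite le_eqVlt => /orP[/eqP [->]|]; [right|left].
      by case=> [/ltW|->].
    rewrite measureU //; first by rewrite -[RHS]adde0; congr (_ + _); exact: HX.
    + exact: mS'.
    + apply/seteqP; split => y //= [] /[swap] ->; rewrite /S' /= ltxx //.
  - by rewrite (_ : S +oo = S' +oo).
  - rewrite (_ : S -oo = S' -oo) //.
rewrite ae2; apply: (le_trans u2); rewrite EFinD; exact: leeD2r.
Qed.
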